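(* Let $X$, $d$, $(e_n,e_n^* )$, $\mathbb{P}$, $V$, $F$, $(g_k)$, $(m_k)$, $(\lambda_k)$, $S$ and $T$ be as in the context. Then the $d$-fold direct sum $T_d=T\oplus\cdots\oplus T$ on $X^d$ is not recurrent.
   Context: Let $X$ be a separable infinite-dimensional complex Banach space and $d\in\mathbb{N}$. Let $(e_n,e_n^* )_{n\in\mathbb{N}}\subset X\times X^*$ satisfy: $\mathrm{span}\{e_n\}$ is dense in $X$, $e_n^*(e_m)=\delta_{n,m}$, $\|e_n\|=1$ and $\sup_n\|e_n^*\|<\infty$. Let $V=\mathrm{span}(e_1,\dots,e_d)$ and $\mathbb{P}x=\sum_{i=1}^d e_i^*(x)e_i$. Let $F\subset V$ be asymptotically separated (i.e. there are $g_n\in X^*$ with $\liminf_n|g_n(x)|=0$ for $x\in F$ and $\lim_n|g_n(x)|=\infty$ for $x\in V\setminus F$), with both $F$ and $V\setminus F$ dense in $V$. Let $(m_k)$ be an increasing sequence of positive integers with $m_k\mid m_{k+1}$ for all $k$ and $\sum_{k\ge d+1}\frac{m_{k-2}}{m_{k-1}}\|g_k\|<\infty$. Let $\lambda_k=1$ for $1\le k\le d$ and $\lambda_k=\exp(i\pi/m_k)$ for $k>d$, and let $S$ be the bounded operator on $X$ extending $\sum_{k=1}^\ell x_ke_k\mapsto\sum_{k=1}^\ell\lambda_kx_ke_k$. Define $Tx=Sx+\sum_{k=d+1}^\infty\frac{1}{m_{k-1}}g_k(\mathbb{P}x)e_k$. It is known (Augé) that $T$ is a bounded operator with $\{x:\|T^nx\|\to\infty\}=\mathbb{P}^{-1}(V\setminus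 F)$ and $\mathrm{Rec}(T)=\mathbb{P}^{-1}(F)$, where $\mathrm{Rec}(T)$ is the set of $x$ with $T^{\omega_n}x\to x$ for some strictly increasing sequence $(\omega_n)$ of positive integers. An operator is recurrent if its set of recurrent vectors is dense. *)

(* Defs.v *)
(* Complex scalars are [R[i]] (mathcomp-real-closed's
   [complex R]) for [R : realType]; a complex Banach space is a
   [completeNormedModType R[i]]. *)
From mathcomp Require Import all_boot all_order all_algebra.
From mathcomp Require Import all_classical all_reals all_analysis.
From mathcomp Require Export complex.
Import Order.TTheory GRing.Theory Num.Theory.
Import numFieldTopology.Exports numFieldNormedType.Exports.

Set Implicit Arguments.
Unset Strict Implicit.
Unset Printing Implicit Defensive.

Local Open Scope ring_scope.
Local Open Scope classical_set_scope.

Section Defs.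
Variable R : realType.
Local Notation C := (R[i]).

(* real value of the (complex-valued, real and nonnegative) norm *)
Definition rnorm (V : normedModType C) (x : V) : R := complex.Re `|x|.
Definition cabs (z : C) : R := complex.Re `|z|.

Variable X : normedModType C.

Definition is_dual (f : X -> C) : Prop :=
  (forall (a : C) (x y : X), f (a *: x + y) = a * f x + f y) /\ continuous (f : X -> (C : numFieldType)).

Definition is_bounded_op (A : X -> X) : Prop :=
  (forall (a : C) (x y : X), A (a *: x + y) = a *: A x + A y) /\ continuous A.

Definition opnorm (f : X -> C) : R :=
  sup [set cabs (f x) | x in [set x : X | rnorm x <= 1]].

Definition separable_space : Prop :=
  exists D : set X, countable D /\ closure D = setT.

Definition infinite_dimensional : Prop :=
  ~ exists s : seq X, forall x : X,
      exists c : nat -> C, x = \sum_(i < size s) c i *: nth 0 s i.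

End Defs.

Definition recurrent_vector (U : topologicalType) (T : U -> U) (x : U) : Prop :=
  exists w : nat -> nat,
    (forall n, (0 < w n)%N) /\ (forall n, (w n < w n.+1)%N) /\
    ((fun n => iter (w n) T x) @ \oo --> x).

Definition Rec (U : topologicalType) (T : U -> U) : set U :=
  [set x | recurrent_vector T x].

Definition recurrent_op (U : topologicalType) (T : U -> U) : Prop :=
  closure (Rec T) = setT.

(* the d-fold direct sum T (+) ... (+) T on X^d, with X^d carrying the
   product topology (= the norm topology of the direct sum) *)
Definition dsum (U : topologicalType) (d : nat) (T : U -> U) :
  {ptws 'I_d -> U} -> {ptws 'I_d -> U} :=
  fun y => (fun i => T (y i)).
Arguments dsum {U} d T _ _.

(* Main.v *)
Require Import Defs.
Set Implicit Arguments. Unset Strict Implicit.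
From mathcomp Require Import all_boot all_order all_algebra.
From mathcomp Require Import all_classical all_reals all_analysis.
From mathcomp Require Import complex.
From mathcomp Require Import ring lra zify.
From mathcomp Require Import fingroup perm.
Import Order.TTheory GRing.Theory Num.Theory.
Import numFieldTopology.Exports numFieldNormedType.Exports.
Local Open Scope ring_scope.
Local Open Scope classical_set_scope.
Local Open Scope complex_scope.
Lemma demoivre (R : realType) (t : R) (j : nat) :
  (Complex (cos t) (sin t)) ^+ j = Complex (cos (j%:R * t)) (sin (j%:R * t)).
Proof.
elim: j => [|j IH]; first by rewrite expr0 mul0r cos0 sin0.
rewrite exprS IH.
rewrite -[j.+1]addn1 natrD mulrDl mul1r cosD sinD.
by apply/eqP; rewrite eq_complex /=; apply/andP; split; apply/eqP; ring.
Qed.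

Lemma normC_real (R : realType) (z : R[i]) : `|z| = (cabs z)%:C.
Proof. by rewrite /cabs RRe_real ?normr_real. Qed.

Lemma normX_real (R : realType) (V : normedModType R[i]) (x : V) :
  `|x| = (rnorm x)%:C.
Proof. by rewrite /rnorm RRe_real ?normr_real. Qed.

Lemma Re_le_norm (R : realType) (z : R[i]) : (complex.Re z)%:C <= `|z|.
Proof.
rewrite normc_def lecR; apply: le_trans (ler_norm _) _.
by rewrite -sqrtr_sqr ler_sqrt ?lerDl ?sqr_ge0 // addr_ge0 ?sqr_ge0.
Qed.

Lemma cos_ge_half (R : realType) (t : R) : 0 <= t <= pi / 4%:R -> 1 / 2%:R <= cos t.
Proof.
move=> /andP[t0 t4].
have h1 : 0 <= cos t.
  apply: cos_ge0_pihalf; apply/andP; split.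
    apply: le_trans t0; rewrite oppr_le0 divr_ge0 // pi_ge0 //.
  apply: (le_trans t4); rewrite ler_pM2l ?pi_gt0 // lef_pV2 ?posrE //; lra.
have h2 : 0 <= cos (t *+ 2).
  apply: cos_ge0_pihalf; apply/andP; split.
    apply: le_trans (_ : 0 <= t *+ 2); last by rewrite mulrn_wge0.
    by rewrite oppr_le0 divr_ge0 // pi_ge0.
  rewrite mulr2n; have := pi_ge0 R; lra.
rewrite cos_mulr2n in h2; nra.
Qed.
Lemma sum_complex (R : realType) (n : nat) (a b : nat -> R) :
  \sum_(j < n) Complex (a j) (b j) = Complex (\sum_(j < n) a j) (\sum_(j < n) b j) :> R[i].
Proof.
elim: n => [|n IH]; first by rewrite !big_ord0.
by rewrite !big_ord_recr IH.
Qed.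

Lemma sum_lam_bound (R : realType) (M n : nat) : (0 < M)%N -> (4 * n <= M)%N ->
  (n%:R / 2%:R)%:C <=
  `|\sum_(j < n) (Complex (cos (pi / M%:R)) (sin (pi / M%:R)))^+j| :> R[i].
Proof.
move=> M0 nM.
apply: (le_trans _ (Re_le_norm _)).
under eq_bigr do rewrite demoivre.
rewrite (sum_complex n (fun j => cos (j%:R * (pi / M%:R))) (fun j => sin (j%:R * (pi / M%:R)))) /= lecR.
have -> : n%:R / 2%:R = \sum_(j < n) (1 / 2%:R : R).
  by rewrite sumr_const card_ord div1r -(mulr_natr (2^-1 : R) n) mulrC.
apply: ler_sum => j _; apply: cos_ge_half.
have Mp : (0 : R) < M%:R by rewrite ltr0n.
apply/andP; split; first by rewrite mulr_ge0 ?divr_ge0 ?pi_ge0.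
rewrite [X in X <= _]mulrC -mulrA ler_pM2l ?pi_gt0 // mulrC ler_pdivrMr //.
rewrite mulrC ler_pdivlMr ?ltr0n // -natrM ler_nat mulnC.
by apply: leq_trans nM; rewrite leq_mul2l /= ltnW.
Qed.
Section LinFacts.
End LinFacts.

Lemma dual0 (R : realType) (X : normedModType R[i]) (f : X -> R[i]) :
  is_dual f -> f 0 = 0.
Proof.
case=> lin _; have h := lin 1 0 0; rewrite scale1r addr0 mul1r in h.
by apply: (addrI (f 0)); rewrite addr0 -h.
Qed.

Lemma dualD (R : realType) (X : normedModType R[i]) (f : X -> R[i]) :
  is_dual f -> forall x y, f (x + y) = f x + f y.
Proof. by case=> lin _ x y; have := lin 1 x y; rewrite scale1r mul1r. Qed.

Lemma dualZ (R : realType) (X : normedModType R[i]) (f : X -> R[i]) :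
  is_dual f -> forall a x, f (a *: x) = a * f x.
Proof.
move=> hf a x; have := hf.1 a x 0; rewrite !addr0 => ->.
by rewrite (dual0 hf) addr0.
Qed.

Lemma dual_sum (R : realType) (X : normedModType R[i]) (f : X -> R[i])
  (I : Type) (r : seq I) (P : pred I) (F : I -> X) :
  is_dual f -> f (\sum_(i <- r | P i) F i) = \sum_(i <- r | P i) f (F i).
Proof.
move=> hf; apply: (big_morph f (dualD hf) (dual0 hf)).
Qed.

Lemma bop0 (R : realType) (X : normedModType R[i]) (f : X -> X) :
  is_bounded_op f -> f 0 = 0.
Proof.
case=> lin _; have h := lin 1 0 0; rewrite scale1r addr0 scale1r in h.
by apply: (addrI (f 0)); rewrite addr0 -h.
Qed.

Lemma bopD (R : realType) (X : normedModType R[i]) (f : X -> X) :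
  is_bounded_op f -> forall x y, f (x + y) = f x + f y.
Proof. by case=> lin _ x y; have := lin 1 x y; rewrite !scale1r. Qed.

Lemma bopZ (R : realType) (X : normedModType R[i]) (f : X -> X) :
  is_bounded_op f -> forall a x, f (a *: x) = a *: f x.
Proof.
move=> hf a x; have := hf.1 a x 0; rewrite !addr0 => ->.
by rewrite (bop0 hf) addr0.
Qed.

Lemma bop_sum (R : realType) (X : normedModType R[i]) (f : X -> X)
  (I : Type) (r : seq I) (P : pred I) (F : I -> X) :
  is_bounded_op f -> f (\sum_(i <- r | P i) F i) = \sum_(i <- r | P i) f (F i).
Proof.
move=> hf; apply: (big_morph f (bopD hf) (bop0 hf)).
Qed.

Lemma dual_bound (R : realType) (X : normedModType R[i]) (f : X -> R[i]) :
  is_dual f -> forall y, `|f y| <= (opnorm f)%:C * `|y|.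
Proof.
move=> hf.
have f0 := dual0 hf.
have c0 : (f : X -> (R[i] : numFieldType)) x @[x --> (0 : X)] --> (0 : (R[i] : numFieldType)).
  by rewrite -f0; apply: hf.2.
move: c0 => /cvgr_dist_lt /(_ 1 ltr01).
move=> /nbhs_normP [del /= del0 Hdel].
have Hb : forall y : X, `|y| <= 1 -> `|f y| < 2 / del.
  move=> y y1.
  have tpos : 0 < del / 2 by rewrite divr_gt0.
  have : `|0 - f ((del / 2) *: y)| < 1.
    apply: Hdel; rewrite /ball_ /= sub0r normrN normrZ ger0_norm ?ltW //.
    apply: (le_lt_trans (y := del / 2)); first by apply: ler_piMr => //; apply: ltW.
    by rewrite ltr_pdivrMr // ltr_pMr // ltr1n.
  rewrite sub0r normrN (dualZ hf) normrM ger0_norm ?ltW // => h.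
  rewrite ltr_pdivlMr // (_ : `|f y| * del = del / 2 * `|f y| * 2); last first.
    by field.
  by rewrite -[X in _ < X]mul1r ltr_pM2r.
set E := [set cabs (f x) | x in [set x : X | rnorm x <= 1]].
have hE : has_ubound E.
  exists (cabs (2 / del)) => _ [x /= x1 <-].
  rewrite -lecR -!normC_real; apply/ltW; rewrite [X in _ < X]ger0_norm.
    apply: Hb; rewrite normX_real.
    by have : (rnorm x)%:C <= (1:R)%:C by rewrite lecR.
  by rewrite divr_ge0 // ltW.
have ubE := ub_le_sup hE.
move=> y; have [->|y0] := eqVneq y 0; first by rewrite f0 !normr0 mulr0.
have ny0 : 0 < `|y| by rewrite normr_gt0.
set u := (`|y|)^-1 *: y.
have nu : `|u| = 1 by rewrite normrZ normrV ?unitfE ?normr_eq0 // normr_id mulVf ?normr_eq0.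
have fu : cabs (f u) <= opnorm f.
  apply: ubE; exists u => //=.
  have : (rnorm u)%:C = 1 :> R[i] by rewrite -normX_real.
  by case=> ->.
have fy : f y = `|y| * f u.
  by rewrite -(dualZ hf) /u scalerA mulfV ?normr_eq0 // scale1r.
by rewrite fy normrM normr_id mulrC ler_pM2r // normC_real lecR.
Qed.
Lemma eq_on_dense (R : realType) (T : topologicalType)
  (h1 h2 : T -> (R[i] : numFieldType)) (D : set T) :
  continuous h1 -> continuous h2 -> closure D = setT ->
  (forall x, D x -> h1 x = h2 x) -> forall x, h1 x = h2 x.
Proof.
move=> c1 c2 cD hD x.
pose f := h1 - h2.
have cf : continuous f := fun x => continuousB (c1 x) (c2 x).
have clA : closed (f @^-1` [set 0]).
  apply: preimage_closed; last by apply: accessible_closed_set1; apply: hausdorff_accessible; exact: norm_hausdorff.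
  by move=> y _; exact: cf.
have : closure D `<=` f @^-1` [set 0].
  move/closure_id: clA => ->; apply: closureS => y /hD.
  by rewrite /f /= => h; change (h1 y - h2 y = 0); rewrite h subrr.
rewrite cD => /(_ x I); rewrite /f /= => h.
by apply/eqP; rewrite -subr_eq0; apply/eqP; exact: h.
Qed.
Lemma sum_delta (R : realType) (a : nat -> R[i]) (lo N k : nat) :
  \sum_(lo <= i < N) a i * (k == i)%:R = if (lo <= k < N)%N then a k else 0.
Proof.
elim: N => [|N IH]; first by rewrite big_geq // ltn0 andbF.
have [loN|Nlo] := leqP lo N; last first.
  rewrite big_geq //; case: ifP => // /andP[h1 h2].
  lia.
rewrite big_nat_recr //= IH.
have [->|kN] := eqVneq k N.
  by rewrite ltnn andbF ltnSn loN add0r mulr1.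
by rewrite mulr0 addr0 ltnS [(k <= N)%N]leq_eqVlt (negbTE kN).
Qed.

Lemma es_span (R : realType) (X : normedModType R[i]) (e : nat -> X)
  (es : nat -> X -> R[i]) :
  (forall n, (1 <= n)%N -> is_dual (es n)) ->
  (forall n k, (1 <= n)%N -> (1 <= k)%N -> es n (e k) = (n == k)%:R) ->
  forall (c : nat -> R[i]) lo N k, (1 <= lo)%N -> (1 <= k)%N ->
  es k (\sum_(lo <= i < N) c i *: e i) = if (lo <= k < N)%N then c k else 0.
Proof.
move=> hd hb c lo N k lo1 k1.
rewrite (dual_sum _ _ _ (hd k k1)) -sum_delta; apply: eq_big_nat => i /andP[loi _].
by rewrite (dualZ (hd k k1)) hb // (leq_trans lo1 loi).
Qed.
Lemma es_S (R : realType) (X : normedModType R[i]) (e : nat -> X)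
  (es : nat -> X -> R[i]) (S : X -> X) (lambda : nat -> R[i]) :
  (forall n, (1 <= n)%N -> is_dual (es n)) ->
  closure [set x : X | exists (N : nat) (c : nat -> R[i]),
                         x = \sum_(1 <= k < N) c k *: e k] = setT ->
  (forall n k, (1 <= n)%N -> (1 <= k)%N -> es n (e k) = (n == k)%:R) ->
  is_bounded_op S ->
  (forall (l : nat) (x : nat -> R[i]),
      S (\sum_(1 <= k < l.+1) x k *: e k)
      = \sum_(1 <= k < l.+1) (lambda k * x k) *: e k) ->
  forall k y, (1 <= k)%N -> es k (S y) = lambda k * es k y.
Proof.
move=> hd hdense hb hS hSf k y k1.
apply: (@eq_on_dense R X (fun y => es k (S y)) (fun y => lambda k * es k y) _ _ _ hdense).
- move=> z; apply: continuous_comp; [exact: hS.2 | exact: (hd k k1).2].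
- by move=> z; apply: cvgMl_tmp; exact: (hd k k1).2.
move=> z [N [c ->]].
case: N => [|l].
  by rewrite big_geq // (bop0 hS) (dual0 (hd k k1)) mulr0.
rewrite hSf !(es_span hd hb) //.
by case: ifP => //; rewrite mulr0.
Qed.

Lemma es_T (R : realType) (X : normedModType R[i]) (e : nat -> X)
  (es : nat -> X -> R[i]) (S T : X -> X) (lambda : nat -> R[i])
  (d : nat) (m : nat -> nat) (g : nat -> X -> R[i]) (P : X -> X) :
  (forall n, (1 <= n)%N -> is_dual (es n)) ->
  (forall n k, (1 <= n)%N -> (1 <= k)%N -> es n (e k) = (n == k)%:R) ->
  (forall k y, (1 <= k)%N -> es k (S y) = lambda k * es k y) ->
  (forall x : X,
      (fun N : nat => \sum_(d.+1 <= k < N)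
                        (((m (k - 1)%N)%:R)^-1 * g k (P x)) *: e k)
        @ \oo --> T x - S x) ->
  forall k y, (1 <= k)%N -> es k (T y) = lambda k * es k y +
     (if (d < k)%N then ((m (k - 1)%N)%:R)^-1 * g k (P y) else 0).
Proof.
move=> hd hb hS hT k y k1.
have -> : T y = (T y - S y) + S y by rewrite subrK.
rewrite (dualD (hd k k1)) hS // addrC; congr (_ + _).
pose u := fun N : nat => \sum_(d.+1 <= j < N) (((m (j - 1)%N)%:R)^-1 * g j (P y)) *: e j.
have h1 : ((es k : X -> (R[i] : numFieldType)) \o u) @ \oo --> (es k (T y - S y) : (R[i] : numFieldType)).
  exact: (cvg_comp _ _ (hT y) ((hd k k1).2 _)).
have h2 : ((es k : X -> (R[i] : numFieldType)) \o u) @ \oo --> ((if (d < k)%N then ((m (k - 1)%N)%:R)^-1 * g k (P y) else 0) : (R[i] : numFieldType)).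
  apply: cvg_near_cst; near=> N.
  rewrite /= /u (es_span hd hb) //.
  have kN : (k < N)%N by near: N; exists k.+1 => // n /=.
  by rewrite kN andbT.
exact: (cvg_unique _ h1 h2).
Unshelve. all: by end_near.
Qed.
Lemma P_iter (R : realType) (X : normedModType R[i]) (e : nat -> X)
  (es : nat -> X -> R[i]) (T : X -> X) (lambda : nat -> R[i])
  (d : nat) (c : nat -> X -> R[i]) (P : X -> X) :
  (forall x, P x = \sum_(1 <= i < d.+1) es i x *: e i) ->
  (forall k, (k <= d)%N -> lambda k = 1) ->
  (forall k y, (1 <= k)%N -> es k (T y) = lambda k * es k y +
     (if (d < k)%N then c k y else 0)) ->
  forall n y, P (iter n T y) = P y.
Proof.
move=> hP hl hT; elim=> [//|n IH] y.
rewrite iterS; transitivity (P (iter n T y)); last exact: IH.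
rewrite !hP; apply: eq_big_nat => i /andP[i1 id].
by rewrite hT // hl // mul1r ltnNge -ltnS id addr0.
Qed.

Lemma sum_geomS (R : realType) (a : R[i]) (n : nat) :
  \sum_(j < n.+1) a ^+ j = 1 + a * \sum_(j < n) a ^+ j.
Proof.
rewrite big_ord_recl expr0 mulr_sumr; congr (_ + _); apply: eq_bigr => i _.
by rewrite /= /bump /= add1n exprS.
Qed.

Lemma es_iter (R : realType) (X : normedModType R[i]) (e : nat -> X)
  (es : nat -> X -> R[i]) (T : X -> X) (lambda : nat -> R[i])
  (d : nat) (c : nat -> X -> R[i]) (P : X -> X) :
  (forall n y, P (iter n T y) = P y) ->
  (forall k y, (1 <= k)%N -> es k (T y) = lambda k * es k y +
     (if (d < k)%N then c k (P y) else 0)) ->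
  forall k n y, (d < k)%N ->
  es k (iter n T y) = lambda k ^+ n * es k y
                      + c k (P y) * \sum_(j < n) lambda k ^+ j.
Proof.
move=> hPi hT k n y dk.
have k1 : (1 <= k)%N by apply: leq_ltn_trans dk.
elim: n => [|n IH].
  by rewrite big_ord0 expr0 mul1r mulr0 addr0.
rewrite iterS hT // dk hPi IH sum_geomS.
rewrite exprS; ring.
Qed.
Lemma cabsM (R : realType) (a b : R[i]) : cabs (a * b) = cabs a * cabs b.
Proof.
by apply: (@complexI R); rewrite rmorphM /= -!normC_real normrM.
Qed.

Lemma cabsD (R : realType) (a b : R[i]) : cabs (a + b) <= cabs a + cabs b.
Proof. by rewrite -(@lecR R) rmorphD /= -!normC_real ler_normD. Qed.

Lemma cabsB (R : realType) (a b : R[i]) : cabs a - cabs b <= cabs (a - b).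
Proof.
have := cabsD (a - b) b; rewrite subrK; lra.
Qed.

Lemma cabs_ge0 (R : realType) (a : R[i]) : 0 <= cabs a.
Proof. by rewrite /cabs normc_def /= sqrtr_ge0. Qed.

Lemma cabs_le (R : realType) (a b : R[i]) : (cabs a <= cabs b) = (`|a| <= `|b|).
Proof. by rewrite !normC_real lecR. Qed.

Lemma cabs_natV (R : realType) (n : nat) : cabs ((n%:R : R[i])^-1) = (n%:R)^-1.
Proof.
rewrite /cabs ger0_norm ?invr_ge0 ?ler0n //.
by rewrite -(rmorph_nat (@real_complex_def R (Phant R))) -fmorphV.
Qed.

Lemma cabs_lam (R : realType) (t : R) (j : nat) :
  cabs ((Complex (cos t) (sin t)) ^+ j) = 1.
Proof.
by rewrite /cabs normrX normc_def /= cos2Dsin2 sqrtr1 expr1n.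
Qed.

Lemma rnorm_ge0 (R : realType) (V : normedModType R[i]) (x : V) : 0 <= rnorm x.
Proof. by have := normr_ge0 x; rewrite lecE => /andP[]. Qed.

Lemma dual_bound_r (R : realType) (X : normedModType R[i]) (f : X -> R[i]) (M : R) :
  is_dual f -> opnorm f <= M -> forall y, cabs (f y) <= M * rnorm y.
Proof.
move=> hf hM y; rewrite -(@lecR R) rmorphM /= -normC_real -normX_real.
apply: (le_trans (dual_bound hf y)); apply: ler_wpM2r => //.
by rewrite lecR.
Qed.
Lemma incr_ge (w : nat -> nat) : (forall n, (w n < w n.+1)%N) -> forall n, (n <= w n)%N.
Proof. move=> hw; elim=> // n IH; exact: leq_ltn_trans IH (hw n). Qed.

Lemma m_ge (m : nat -> nat) : (forall k, (1 <= k)%N -> (0 < m k)%N) ->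
  (forall k, (1 <= k)%N -> (m k < m k.+1)%N) -> forall k, (k <= m k)%N.
Proof.
move=> h0 h1; elim=> // k IH.
case: k IH => [_|k IH]; first exact: h0.
exact: leq_ltn_trans IH (h1 _ _).
Qed.

Lemma m_mono (m : nat -> nat) :
  (forall k, (1 <= k)%N -> (m k < m k.+1)%N) ->
  forall a b, (1 <= a)%N -> (a <= b)%N -> (m a <= m b)%N.
Proof.
move=> h1 a b a1; elim: b => [|b IH]; first by rewrite leqn0 => /eqP a0; rewrite a0 in a1.
rewrite leq_eqVlt => /orP[/eqP ->//|]; rewrite ltnS => ab.
exact: leq_trans (IH ab) (ltnW (h1 _ (leq_trans a1 ab))).
Qed.

Lemma cabsBle (R : realType) (a b : R[i]) : cabs (a - b) <= cabs a + cabs b.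
Proof. by rewrite -(@lecR R) rmorphD /= -!normC_real ler_normB. Qed.

Lemma core (R : realType) (X : normedModType R[i]) (es : nat -> X -> R[i])
  (T : X -> X) (lambda : nat -> R[i]) (d : nat) (m : nat -> nat)
  (g : nat -> X -> R[i]) (P : X -> X) (M : R) :
  0 <= M ->
  (forall n, (1 <= n)%N -> is_dual (es n)) ->
  (forall n, (1 <= n)%N -> opnorm (es n) <= M) ->
  (forall k, (1 <= k)%N -> (0 < m k)%N) ->
  (forall k, (1 <= k)%N -> (m k < m k.+1)%N) ->
  (forall k, (d < k)%N ->
     lambda k = Complex (cos (pi / (m k)%:R)) (sin (pi / (m k)%:R))) ->
  (forall k n y, (d < k)%N ->
     es k (iter n T y) = lambda k ^+ n * es k y
                      + ((m (k - 1)%N)%:R^-1 * g k (P y)) * \sum_(j < n) lambda k ^+ j) ->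
  forall x, (fun n => cabs (g n (P x))) @ \oo --> +oo ->
  forall w : nat -> nat, (forall n, (w n < w n.+1)%N) ->
  forall B : R, (forall n, rnorm (iter (w n) T x) <= B) -> False.
Proof.
move=> M0 hd hM hm0 hm1 hl hit x hg w hw B hB.
set Q := 8%:R * (M * B + M * rnorm x).
move/cvgryPgt: hg => /(_ Q) [K0 _ HK0].
set K1 := maxn K0 d.+1.
have K1K0 : (K0 <= K1)%N by rewrite leq_maxl.
have K1d : (d < K1)%N by rewrite leq_max leqnn orbT.
have K11 : (1 <= K1)%N by apply: leq_ltn_trans K1d.
set W := w (m K1).
have mW : (m K1 <= W)%N by apply: incr_ge.
have ex : exists k, (K1 < k)%N && (4 * W < m k)%N.
  exists (K1 + 4 * W).+1; apply/andP; split; first by rewrite ltnS leq_addr.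
  apply: leq_trans (m_ge hm0 hm1 _); by rewrite ltnS leq_addl.
case: (ex_minnP ex) => k /andP[K1k Wk] kmin.
have k1 : (1 <= k - 1)%N by apply: leq_trans K11 _; lia.
have mk1 : (m (k - 1)%N <= 4 * W)%N.
  have [K1k1|] := ltnP K1 (k - 1)%N.
    rewrite leqNgt; apply/negP => h.
    have := kmin (k - 1)%N; rewrite K1k1 h /= => /(_ isT); lia.
  move=> h; have -> : (k - 1)%N = K1 by lia.
  by apply: leq_trans mW _; rewrite leq_pmull.
have dk : (d < k)%N by apply: leq_trans K1d (ltnW K1k).
have k1' : (1 <= k)%N by apply: leq_ltn_trans dk.
have mk1p : (0 < m (k - 1)%N)%N by apply: hm0.
have mkp : (0 < m k)%N by apply: hm0.
have HG : Q < cabs (g k (P x)) by apply: HK0 => /=; lia.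
set G := cabs (g k (P x)).
set Sg := \sum_(j < W) lambda k ^+ j.
have hS : (W%:R / 2%:R) <= cabs Sg.
  rewrite -(@lecR R) -normC_real /Sg hl //.
  by have := (sum_lam_bound R mkp (ltnW Wk)).
have hE := hit k W x dk.
set a := es k x in hE.
set C := (m (k - 1)%N)%:R^-1 * g k (P x) in hE.
have hEb : cabs (es k (iter W T x)) <= M * B.
  apply: le_trans (dual_bound_r (hd k k1') (hM k k1') _) _.
  by apply: ler_wpM2l => //; apply: hB.
have ha : cabs a <= M * rnorm x by apply: (dual_bound_r (hd k k1') (hM k k1')).
have hL : cabs (lambda k ^+ W) = 1 by rewrite hl // cabs_lam.
have hC : cabs C = (m (k - 1)%N)%:R^-1 * G by rewrite /C cabsM cabs_natV.
have hCS : cabs (C * Sg) <= M * B + M * rnorm x.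
  have -> : C * Sg = es k (iter W T x) - lambda k ^+ W * a by rewrite hE addrC addKr.
  apply: le_trans (cabsBle _ _) _; rewrite cabsM hL mul1r; exact: lerD.
rewrite cabsM hC in hCS.
have B0 : 0 <= B by apply: le_trans (hB 0); exact: rnorm_ge0.
have r0 := rnorm_ge0 x.
have K0' : 0 <= M * B + M * rnorm x by rewrite addr_ge0 ?mulr_ge0.
have G0 : 0 <= G by apply: cabs_ge0.
have mr0 : (0 : R) < (m (k - 1)%N)%:R by rewrite ltr0n.
have mrW : ((m (k - 1)%N)%:R : R) <= 4%:R * W%:R by rewrite -natrM ler_nat.
have W0 : (0 : R) < W%:R by rewrite ltr0n; apply: leq_trans mW; apply: hm0.
set K := M * B + M * rnorm x in hCS K0' HG.
set mr := ((m (k - 1)%N)%:R : R) in hCS mr0 mrW.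
set Wr := (W%:R : R) in hS mrW W0.
have h1 : G * cabs Sg <= mr * K.
  by rewrite -ler_pdivrMl // mulrA.
have h2 : G * (Wr / 2%:R) <= G * cabs Sg by apply: ler_wpM2l.
rewrite /Q -/K in HG.
nra.
Qed.
Lemma cvg_sumC (R : realType) (T : Type) (F : set_system T) (FF : Filter F)
  (I : Type) (r : seq I) (f : I -> T -> (R[i] : numFieldType)) (l : I -> (R[i] : numFieldType)) :
  (forall i, f i x @[x --> F] --> l i) ->
  (\sum_(i <- r) f i x) @[x --> F] --> \sum_(i <- r) l i.
Proof.
move=> h; elim: r => [|i r IH].
  rewrite big_nil; apply: cvg_near_cst; apply: nearW => x; by rewrite big_nil.
have e : (fun x => \sum_(j <- i :: r) f j x) =1 (fun x => f i x + \sum_(j <- r) f j x).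
  by move=> x; rewrite big_cons.
rewrite (eq_cvg F _ e).
have -> : \sum_(j <- i :: r) l j = l i + \sum_(j <- r) l j by rewrite big_cons.
exact: (cvgD (h i) IH).
Qed.
Lemma cvg_prodC (R : realType) (T : Type) (F : set_system T) (FF : Filter F)
  (I : Type) (r : seq I) (f : I -> T -> (R[i] : numFieldType)) (l : I -> (R[i] : numFieldType)) :
  (forall i, f i x @[x --> F] --> l i) ->
  (\prod_(i <- r) f i x) @[x --> F] --> \prod_(i <- r) l i.
Proof.
move=> h; elim: r => [|i r IH].
  rewrite big_nil; apply: cvg_near_cst; apply: nearW => x; by rewrite big_nil.
have e : (fun x => \prod_(j <- i :: r) f j x) =1 (fun x => f i x * \prod_(j <- r) f j x).
  by move=> x; rewrite big_cons.
rewrite (eq_cvg F _ e).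
have -> : \prod_(j <- i :: r) l j = l i * \prod_(j <- r) l j by rewrite big_cons.
exact: (cvgM (h i) IH).
Qed.

Lemma detE (R : realType) (n : nat) (B : 'I_n -> 'I_n -> R[i]) :
  \det (\matrix_(i, j) B i j) = \sum_(s : 'S_n) (-1) ^+ s * \prod_i B i (s i).
Proof.
rewrite /determinant; apply: eq_bigr => s _; congr (_ * _).
by apply: eq_bigr => i _; rewrite mxE.
Qed.

Lemma det_cvg (R : realType) (T : Type) (F : set_system T) (FF : Filter F) (n : nat)
  (A : 'I_n -> 'I_n -> T -> (R[i] : numFieldType)) (L : 'I_n -> 'I_n -> (R[i] : numFieldType)) :
  (forall i j, A i j x @[x --> F] --> L i j) ->
  (\det (\matrix_(i, j) A i j x) : (R[i] : numFieldType)) @[x --> F] --> \det (\matrix_(i, j) L i j).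
Proof.
move=> h.
have e : (fun x => \det (\matrix_(i, j) A i j x) : (R[i] : numFieldType)) =1
  (fun x => \sum_(s : 'S_n) (-1) ^+ s * \prod_i A i (s i) x).
  by move=> x; rewrite detE.
rewrite (eq_cvg F _ e) detE.
apply: cvg_sumC => s.
have e2 : (fun x => (-1) ^+ s * \prod_i A i (s i) x : (R[i] : numFieldType)) =1
  (fun x => (-1) ^+ s * \prod_(i <- index_enum _) A i (s i) x).
  by [].
apply: cvgMl_tmp.
by apply: cvg_prodC => i; exact: h.
Qed.
Lemma T_lin (R : realType) (X : normedModType R[i]) (e : nat -> X)
  (es : nat -> X -> R[i]) (S T : X -> X)
  (d : nat) (m : nat -> nat) (g : nat -> X -> R[i]) (P : X -> X) :
  (forall n, (1 <= n)%N -> is_dual (es n)) ->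
  (forall x, P x = \sum_(1 <= i < d.+1) es i x *: e i) ->
  (forall n, is_dual (g n)) ->
  is_bounded_op S ->
  (forall x : X,
      (fun N : nat => \sum_(d.+1 <= k < N)
                        (((m (k - 1)%N)%:R)^-1 * g k (P x)) *: e k)
        @ \oo --> T x - S x) ->
  forall a x y, T (a *: x + y) = a *: T x + T y.
Proof.
move=> hd hP hg hS hT a x y.
have hPl : P (a *: x + y) = a *: P x + P y.
  rewrite !hP scaler_sumr -big_split; apply: eq_big_nat => i /andP[i1 _].
  by rewrite (dualD (hd i i1)) (dualZ (hd i i1)) scalerDl scalerA.
pose u z := fun N : nat => \sum_(d.+1 <= k < N) (((m (k - 1)%N)%:R)^-1 * g k (P z)) *: e k.
have eu : u (a *: x + y) =1 (fun N => a *: u x N + u y N).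
  move=> N; rewrite /u scaler_sumr -big_split /=; apply: eq_bigr => k _.
  rewrite hPl (dualD (hg k)) (dualZ (hg k)) scalerA -scalerDl; congr (_ *: _); ring.
have h1 := hT (a *: x + y).
have h2 : (fun N => a *: u x N + u y N) @ \oo --> a *: (T x - S x) + (T y - S y).
  exact: (cvgD (cvgZl_tmp (k:=a) (hT x)) (hT y)).
have h1' : (fun N => a *: u x N + u y N) @ \oo --> T (a *: x + y) - S (a *: x + y).
  by rewrite -(eq_cvg _ _ eu).
have := cvg_unique (@norm_hausdorff _ X) h1' h2.
rewrite (bopD hS) (bopZ hS) => h.
have : T (a *: x + y) = a *: (T x - S x) + (T y - S y) + (a *: S x + S y).
  by rewrite -h subrK.
by move=> ->; rewrite scalerBr addrACA !subrK.
Qed.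
Lemma iter_dsum (U : topologicalType) (d : nat) (T : U -> U) (y : {ptws 'I_d -> U}) n :
  iter n (dsum d T) y = (fun i => iter n T (y i)).
Proof.
elim: n => [//|n IH]; rewrite iterS IH; apply/funext => i //.
Qed.

Lemma iter_lin (R : realType) (X : normedModType R[i]) (T : X -> X) :
  (forall a x y, T (a *: x + y) = a *: T x + T y) ->
  forall n (I : Type) (r : seq I) (a : I -> R[i]) (y : I -> X),
  iter n T (\sum_(i <- r) a i *: y i) = \sum_(i <- r) a i *: iter n T (y i).
Proof.
move=> hl.
have T0 : T 0 = 0.
  have := hl 1 0 0; rewrite !scale1r addr0 => h.
  by apply: (addrI (T 0)); rewrite addr0 -h.
have TD : forall x y, T (x + y) = T x + T y by move=> x y; have := hl 1 x y; rewrite !scale1r.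
have TZ : forall a x, T (a *: x) = a *: T x by move=> a x; rewrite -[a *: x]addr0 hl T0 addr0.
elim=> [|n IH] I r a y.
  by [].
rewrite iterS IH (big_morph T TD T0); apply: eq_bigr => i _.
by rewrite TZ.
Qed.

Lemma cvg_sumX (R : realType) (X : normedModType R[i]) (T : Type) (F : set_system T) (FF : Filter F)
  (I : Type) (r : seq I) (f : I -> T -> X) (l : I -> X) :
  (forall i, f i x @[x --> F] --> l i) ->
  (\sum_(i <- r) f i x) @[x --> F] --> \sum_(i <- r) l i.
Proof.
move=> h; elim: r => [|i r IH].
  rewrite big_nil; apply: cvg_near_cst; apply: nearW => x; by rewrite big_nil.
have e : (fun x => \sum_(j <- i :: r) f j x) =1 (fun x => f i x + \sum_(j <- r) f j x).
  by move=> x; rewrite big_cons.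
rewrite (eq_cvg F _ e).
have -> : \sum_(j <- i :: r) l j = l i + \sum_(j <- r) l j by rewrite big_cons.
exact: (cvgD (h i) IH).
Qed.
Unset Implicit Arguments.
Local Close Scope complex_scope.
Theorem proposition3p7
  (R : realType) (X : completeNormedModType R[i])
  (d : nat)
  (e : nat -> X) (es : nat -> X -> R[i])
  (F : set X) (g : nat -> X -> R[i]) (m : nat -> nat)
  (S T : X -> X) :
  (* X separable, infinite-dimensional *)
  separable_space X ->
  infinite_dimensional X ->
  (1 <= d)%N ->
  (* the biorthogonal system (e_n, e_n^* ), n >= 1 *)
  (forall n, (1 <= n)%N -> is_dual (es n)) ->
  closure [set x : X | exists (N : nat) (c : nat -> R[i]),
                         x = \sum_(1 <= k < N) c k *: e k] = setT ->
  (forall n k, (1 <= n)%N -> (1 <= k)%N -> es n (e k) = (n == k)%:R) ->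
  (forall n, (1 <= n)%N -> `|e n| = 1) ->
  (exists M : R, forall n, (1 <= n)%N -> opnorm (es n) <= M) ->
  let V := [set x : X | exists c : nat -> R[i],
                          x = \sum_(1 <= i < d.+1) c i *: e i] in
  let P := fun x : X => \sum_(1 <= i < d.+1) es i x *: e i in
  (* F asymptotically separated, F and V \ F dense in V *)
  F `<=` V ->
  (forall n, is_dual (g n)) ->
  (forall x, F x -> limn_einf (fun n => (cabs (g n x))%:E) = 0%E) ->
  (forall x, V x -> ~ F x -> (fun n => cabs (g n x)) @ \oo --> +oo) ->
  V `<=` closure F ->
  V `<=` closure (V `\` F) ->
  (* the sequence (m_k) *)
  (forall k, (1 <= k)%N -> (0 < m k)%N) ->
  (forall k, (1 <= k)%N -> (m k < m k.+1)%N) ->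
  (forall k, (1 <= k)%N -> (m k %| m k.+1)%N) ->
  cvg (series (fun k : nat => if (d < k)%N
                 then (m (k - 2)%N)%:R / (m (k - 1)%N)%:R * opnorm (g k)
                 else 0 : R) @ \oo) ->
  let lambda := fun k : nat => if (k <= d)%N then 1
                  else Complex (cos (pi / (m k)%:R)) (sin (pi / (m k)%:R)) in
  (* S: the bounded diagonal operator *)
  is_bounded_op S ->
  (forall (l : nat) (x : nat -> R[i]),
      S (\sum_(1 <= k < l.+1) x k *: e k)
      = \sum_(1 <= k < l.+1) (lambda k * x k) *: e k) ->
  (* T x = S x + sum_{k >= d+1} (1/m_{k-1}) g_k(P x) e_k *)
  (forall x : X,
      (fun N : nat => \sum_(d.+1 <= k < N)
                        (((m (k - 1)%N)%:R)^-1 * g k (P x)) *: e k)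
        @ \oo --> T x - S x) ->
  ~ recurrent_op (dsum d T).
Proof.
move=> _ _ d1 hdual hdense hbio hnorm [M hM] V P hFV hg hgF hgVF hVF hVVF
  hm0 hm1 _ _ lambda hS hSf hT Hrec.
have hSk : forall k y, (1 <= k)%N -> es k (S y) = lambda k * es k y.
  exact: (es_S hdual hdense hbio hS hSf).
have hTk := es_T hdual hbio hSk hT.
have hP : forall x, P x = \sum_(1 <= i < d.+1) es i x *: e i by [].
have hl : forall k, (k <= d)%N -> lambda k = 1 by move=> k kd; rewrite /lambda kd.
have hPi := P_iter (c := fun k y => ((m (k - 1)%N)%:R)^-1 * g k (P y)) hP hl hTk.
have hit := es_iter e (c := fun k p => ((m (k - 1)%N)%:R)^-1 * g k p) hPi hTk.
have hlam : forall k, (d < k)%N ->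
    lambda k = Complex (cos (pi / (m k)%:R)) (sin (pi / (m k)%:R)).
  by move=> k dk; rewrite /lambda leqNgt dk.
have Tl := T_lin hdual hP hg hS hT.
pose E : {ptws 'I_d -> X} := fun i => e i.+1.
pose A := fun (y : {ptws 'I_d -> X}) (i j : 'I_d) => (es j.+1 (y i) : (R[i] : numFieldType)).
have cA : forall i j, A y i j @[y --> E] --> A E i j.
  move=> i j; apply: (cvg_comp _ _ (@proj_continuous _ _ i E)).
  exact: (hdual j.+1 isT).2.
have cdet := @det_cvg R _ (nbhs E) (nbhs_filter E) d (fun i j y => A y i j) (A E) cA.
have detE1 : \det (\matrix_(i, j) A E i j) = 1.
  have -> : \matrix_(i, j) A E i j = 1%:M.
    apply/matrixP => i j; rewrite !mxE /A /E hbio // eqSS eq_sym.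
    reflexivity.
  exact: det1.
rewrite detE1 in cdet.
have near1 : \forall y \near E, \det (\matrix_(i, j) A y i j) != 0.
  move: cdet => /cvgr_dist_lt /(_ 1 ltr01); apply: filterS => y h.
  by apply/eqP => h0; rewrite h0 subr0 normr1 ltxx in h.
have : closure (Rec (dsum d T)) E by rewrite Hrec.
move=> /(_ _ near1) [y [Ry dety]].
case: Ry => w [wpos [winc hcv]].
have hcvi : forall i, (fun n => iter (w n) T (y i)) @ \oo --> y i.
  move=> i; have h := cvg_comp _ _ hcv (@proj_continuous _ _ i y).
  have e1 : (proj i \o (fun n => iter (w n) (dsum d T) y)) =1 (fun n => iter (w n) T (y i)).
    by move=> n; rewrite /= iter_dsum.
  by rewrite -(eq_cvg _ _ e1).
have V0 : V 0 by exists (fun=> 0); rewrite big1 // => i _; rewrite scale0r.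
have : closure (V `\` F) 0 by apply: hVVF.
move=> /(_ setT filterT) [v [[hVv hFv] _]].
have hVv' := hVv; case: hVv' => cv hv.
pose Mat : 'M[R[i]]_d := \matrix_(i, j) A y i j.
have uM : Mat \in unitmx by rewrite unitmxE unitfE.
pose b : 'rV[R[i]]_d := \row_j cv j.+1.
pose alpha := b *m invmx Mat.
have hab : alpha *m Mat = b by rewrite /alpha mulmxKV.
pose z := \sum_(i < d) alpha 0 i *: y i.
have esz : forall j : 'I_d, es j.+1 z = cv j.+1.
  move=> j; rewrite /z (dual_sum _ _ _ (hdual j.+1 isT)).
  move/matrixP: hab => /(_ ord0 j); rewrite !mxE => <-.
  by apply: eq_bigr => i _; rewrite (dualZ (hdual j.+1 isT)); congr (_ * _); rewrite /Mat mxE.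
have Pz : P z = v.
  rewrite hP hv; apply: eq_big_nat => k /andP[k1 kd].
  have kd' : (k.-1 < d)%N by rewrite prednK.
  have := esz (Ordinal kd'); rewrite /= prednK // => ->.
  by [].
have orb : forall n, iter n T z = \sum_(i < d) alpha 0 i *: iter n T (y i).
  by move=> n; rewrite /z iter_lin.
have cz : (fun n => iter (w n) T z) @ \oo --> z.
  have e1 : (fun n => iter (w n) T z) =1 (fun n => \sum_(i < d) alpha 0 i *: iter (w n) T (y i)).
    by move=> n; rewrite orb.
  rewrite (eq_cvg _ _ e1); apply: cvg_sumX => i.
  exact: (cvgZl_tmp (k:=alpha 0 i) (hcvi i)).
case: (cvg_seq_bounded (cvgP _ cz)) => M0 [_ hM0].
have hB0 := hM0 (M0 + 1) ltac:(by rewrite ltrDl ltr01).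
set B0 := M0 + 1 in hB0.
have hB : forall n, rnorm (iter (w n) T z) <= complex.Re B0.
  move=> n; have : `|iter (w n) T z| <= B0 by exact: (hB0 n I).
  rewrite normX_real lecE => /andP[_].
  by [].
have hgz : (fun n => cabs (g n (P z))) @ \oo --> +oo.
  by rewrite Pz; apply: hgVF.
apply: (core (M := Num.max M 0) _ hdual _ hm0 hm1 hlam hit hgz winc hB).
  by rewrite le_max lexx orbT.
by move=> n n1; rewrite le_max hM.
Qed.
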